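(* Let $a,b$ be positive integers and $n\ge2$ an integer, and let $h(j)=aj^n+b$ for $j\ge0$, $h(j)=0$ for $j<0$. If $\lfloor a/b\rfloor+1\ge 4$, then $\operatorname{hdepth}(h)\ge4$.
   Context: For a nonzero function $h:\mathbb Z\to\mathbb Z_{\ge 0}$ with $h(j)=0$ for all sufficiently negative $j$, and integers $k\le d$, set $\beta_k^d(h)=\sum_{j\le k}(-1)^{k-j}\binom{d-j}{k-j}h(j)$, and $\operatorname{hdepth}(h)=\max\{d\in\mathbb Z:\ \beta_k^d(h)\ge 0\text{ for all integers }k\le d\}$. *)

(* Defs.v *)
From mathcomp Require Import all_boot all_order all_algebra.
Set Implicit Arguments. Unset Strict Implicit. Unset Printing Implicit Defensive.
Import Order.TTheory GRing.Theory Num.Theory.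
Local Open Scope ring_scope.

Definition vanishes_below (L : int) (h : int -> int) : Prop :=
  forall j : int, j < L -> h j = 0.

(* beta_k^d(h) = sum_{j <= k} (-1)^(k-j) C(d-j, k-j) h(j), for k <= d,
   where h vanishes below L, so only j in [L, k] contribute.
   Reindexing j = k - i, i = 0 .. |k - L|; extra terms (when k < L) are
   all zero since h vanishes there.  C(d-j, k-j) = C(|d-k| + i, i). *)
Definition beta (L : int) (h : int -> int) (k d : int) : int :=
  \sum_(i < (`|k - L|%N).+1)
     (-1) ^+ i * ('C(`|d - k|%N + i, i))%:R * h (k - i%:Z).

Definition hdepth_adm (L : int) (h : int -> int) (d : int) : Prop :=
  forall k : int, k <= d -> 0 <= beta L h k d.

Definition is_hdepth (L : int) (h : int -> int) (m : int) : Prop :=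
  vanishes_below L h /\ hdepth_adm L h m /\
  forall d : int, hdepth_adm L h d -> d <= m.

Definition hpoly (a b n : nat) (j : int) : int :=
  if 0 <= j then a%:Z * j ^+ n + b%:Z else 0.

(* Main.v *)
Require Import Defs.
From mathcomp Require Import all_boot all_order all_algebra.
From mathcomp Require Import zify ring lra.
From Stdlib Require Import Classical.
Import Order.TTheory GRing.Theory Num.Theory.
Local Open Scope ring_scope.

Ltac cleanb h :=
  rewrite /beta !big_ord_recr big_ord0 /=;
  repeat match goal with |- context [ 'C(?x, ?y) ] =>
    let v := eval vm_compute in 'C(x, y) in change 'C(x, y) with v end;
  repeat match goal with |- context [ h (?x - ?y) ] =>
    let v := eval vm_compute in (x - y) in change (x - y) with v end.

Lemma b0 (h : int -> int) : beta 0 h 0 4 = h 0.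
Proof. cleanb h. ring. Qed.
Lemma b1 (h : int -> int) : beta 0 h 1 4 = h 1 - 4 * h 0.
Proof. cleanb h. ring. Qed.
Lemma b2 (h : int -> int) : beta 0 h 2 4 = h 2 - 3 * h 1 + 6 * h 0.
Proof. cleanb h. ring. Qed.
Lemma b3 (h : int -> int) : beta 0 h 3 4 = h 3 - 2 * h 2 + 3 * h 1 - 4 * h 0.
Proof. cleanb h. ring. Qed.
Lemma b4 (h : int -> int) : beta 0 h 4 4 = h 4 - h 3 + h 2 - h 1 + h 0.
Proof. cleanb h. ring. Qed.

Lemma exmax (P : int -> Prop) (k : nat) (d : int) :
  P d -> (forall e, P e -> e <= d + k%:Z) ->
  exists m, P m /\ (forall e, P e -> e <= m) /\ d <= m.
Proof.
elim: k d => [|k IH] d Pd Hb.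
  exists d; split => //; split => // e /Hb; by rewrite addr0.
case: (classic (exists e, P e /\ d < e)) => [[e [Pe de]]|N].
  have Hb' : forall e', P e' -> e' <= e + k%:Z by move=> e' /Hb; lia.
  have [m [Pm [Hm em]]] := IH e Pe Hb'.
  exists m; split => //; split => //; exact: le_trans (ltW de) em.
exists d; split => //; split => // e Pe.
case: (lerP e d) => // de; exfalso; apply: N; by exists e.
Qed.

Theorem lemma3p8 (a b n : nat) :
  (0 < a)%N -> (0 < b)%N -> (2 <= n)%N -> (4 <= (a %/ b).+1)%N ->
  exists m : int, is_hdepth 0 (hpoly a b n) m /\ 4 <= m.
Proof.
move=> a0 b0' n2 ab.
case: n n2 => [|[|p]] // _.
have a3b : (3 * b <= a)%N.
  have : (3 * b <= a %/ b * b)%N by rewrite leq_mul2r; apply/orP; right.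
  move=> H; apply: leq_trans H _; exact: leq_trunc_div.
have van : vanishes_below 0 (hpoly a b p.+2).
  by move=> j j0; rewrite /hpoly leNgt j0.
have bound : forall d, hdepth_adm 0 (hpoly a b p.+2) d -> d <= (a + b)%N%:Z.
  move=> d Hd; case: (lerP d 0) => d0; first lia.
  have := Hd 1 (d0 : (0 < d)).
  rewrite /beta subr0 /= !big_ord_recr big_ord0 /= bin0 bin1.
  rewrite /hpoly /= expr1n.
  rewrite subrr expr0n /= natrD natr_absz ger0_norm ?intz ?expr0 ?expr1; [nia|lia].
have adm4 : hdepth_adm 0 (hpoly a b p.+2) 4.
  move=> [k|k] hk.
    have y21 : 1 <= (2:int) ^+ p by rewrite exprn_ege1.
    have y32 : (2:int) ^+ p <= 3 ^+ p by apply: lerXn2r.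
    have y43 : (3:int) ^+ p <= 4 ^+ p by apply: lerXn2r.
    case: k hk => [|[|[|[|[|k]]]]] hk.
    + rewrite b0 /hpoly /= !exprS. lia.
    + rewrite b1 /hpoly /= !exprS expr1n. lia.
    + rewrite b2 /hpoly /= !exprS expr1n. nia.
    + rewrite b3 /hpoly /= !exprS expr1n. nia.
    + rewrite b4 /hpoly /= !exprS expr1n. nia.
    + exfalso; lia.
  - rewrite /beta big1 // => i _.
    rewrite /hpoly; case: ifP => [H|_]; last by rewrite mulr0.
    exfalso; move: H; move: (nat_of_ord i) => j; rewrite NegzE; lia.
have bd : forall e, hdepth_adm 0 (hpoly a b p.+2) e -> e <= 4 + (a + b)%N%:Z.
  move=> e /bound H; apply: le_trans H _; rewrite addrC; first [by rewrite lerDl | by rewrite lerDr | by rewrite ler_addl].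
have [m [Pm [Hm em]]] := @exmax (hdepth_adm 0 (hpoly a b p.+2)) (a + b)%N 4 adm4 bd.
by exists m; split.
Qed.
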